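(* Let $L\ge1$ be an integer. For Lebesgue-almost every $c\in\mathbb{C}^L$, the family of $L^2$ matrices $$\big\{(\pi(k,n)c)(\pi(k,n)c)^*\big\}_{(k,n)\in\mathbb{Z}_L\times\mathbb{Z}_L}\subseteq\mathbb{C}^{L\times L}$$ is linearly independent; that is, the diagonal pattern $\Lambda_{\mathrm{diag}}=\{((k,n),(k,n)):(k,n)\in\mathbb{Z}_L^2\}$ is permissible for almost every $c$.
   Context: On $\mathbb{C}^L$ (indices mod $L$): $T^kc[p]=c[p-k]$, $M^nc[p]=e^{2\pi inp/L}c[p]$, $\pi(k,n)=M^nT^k$. A set $\Lambda\subseteq(\mathbb{Z}_L^2)^2$ is a permissible pattern (for $c$) if the matrices $\{\pi(\lambda)c\,(\pi(\lambda')c)^*\}_{(\lambda,\lambda')\in\Lambda}$ are linearly independent. *)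

(* Defs.v *)
From Stdlib Require Import Reals.
Open Scope R_scope.

Definition C : Type := (R * R)%type.
Definition C0 : C := (0, 0).
Definition Cadd (z w : C) : C := (fst z + fst w, snd z + snd w).
Definition Cmul (z w : C) : C :=
  (fst z * fst w - snd z * snd w, fst z * snd w + snd z * fst w).
Definition Cconj (z : C) : C := (fst z, - snd z).
Definition Cexpi (t : R) : C := (cos t, sin t).

Fixpoint Csum (n : nat) (f : nat -> C) : C :=
  match n with
  | O => C0
  | S m => Cadd (Csum m f) (f m)
  end.

(** Vectors in C^L are functions nat -> C, only the entries 0..L-1 matter;
    indices are taken mod L. *)
Definition cvec := nat -> C.

(** (T^k c)[p] = c[p - k mod L] *)
Definition Tshift (L k : nat) (c : cvec) : cvec :=
  fun p => c (((p mod L) + L - (k mod L)) mod L)%nat.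

Definition Mmod (L n : nat) (c : cvec) : cvec :=
  fun p => Cmul (Cexpi (2 * PI * INR n * INR p / INR L)) (c p).

Definition tfshift (L k n : nat) (c : cvec) : cvec := Mmod L n (Tshift L k c).

Definition diag_permissible (L : nat) (c : cvec) : Prop :=
  forall a : nat -> nat -> C,
    (forall p q : nat, (p < L)%nat -> (q < L)%nat ->
       Csum L (fun k => Csum L (fun n =>
         Cmul (a k n) (Cmul (tfshift L k n c p) (Cconj (tfshift L k n c q)))))
       = C0) ->
    forall k n : nat, (k < L)%nat -> (n < L)%nat -> a k n = C0.

Fixpoint Rsum_n (n : nat) (f : nat -> R) : R :=
  match n with O => 0 | S m => Rsum_n m f + f m end.
Fixpoint Rprod_n (n : nat) (f : nat -> R) : R :=
  match n with O => 1 | S m => Rprod_n m f * f m end.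

Definition lebesgue_null (d : nat) (N : (nat -> R) -> Prop) : Prop :=
  forall eps : R, 0 < eps ->
    exists lo hi : nat -> nat -> R,
      (forall j i, (i < d)%nat -> lo j i <= hi j i) /\
      (forall m, Rsum_n m (fun j => Rprod_n d (fun i => hi j i - lo j i)) <= eps) /\
      (forall x, N x -> exists j, forall i, (i < d)%nat -> lo j i <= x i <= hi j i).

(** Identification R^{2L} = C^L : c[p] = x(2p) + i x(2p+1). *)
Definition vec_of_real (x : nat -> R) : cvec := fun p => (x (2 * p)%nat, x (2 * p + 1)%nat).

(* Main.v *)
Require Import Defs.
From Stdlib Require Import Reals Lra Lia Psatz Arith List Cantor.
From Stdlib Require Import Classical ClassicalEpsilon FunctionalExtensionality.
Open Scope R_scope.

Ltac Cdes := repeat match goal with z : Defs.C |- _ => destruct z end.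
Ltac Csolve := Cdes; unfold Cadd, Cmul, Cconj, C0 in *; simpl in *; try (f_equal; ring).

Lemma Cadd_0_l z : Cadd C0 z = z. Proof. Csolve. Qed.
Lemma Cadd_0_r z : Cadd z C0 = z. Proof. Csolve. Qed.
Lemma Cmul_0_r z : Cmul z C0 = C0. Proof. Csolve. Qed.
Lemma Cmul_0_l z : Cmul C0 z = C0. Proof. Csolve. Qed.

Lemma Csum_ext n F G : (forall j, (j < n)%nat -> F j = G j) -> Csum n F = Csum n G.
Proof. induction n; intros H; simpl; auto. rewrite IHn by (intros; apply H; lia). rewrite H by lia. auto. Qed.

Lemma Csum_zero n F : (forall j, (j < n)%nat -> F j = C0) -> Csum n F = C0.
Proof. induction n; intros H; simpl; auto. rewrite IHn by (intros; apply H; lia). rewrite H by lia. Csolve. Qed.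

Lemma Csum_add n F G : Csum n (fun j => Cadd (F j) (G j)) = Cadd (Csum n F) (Csum n G).
Proof. induction n; simpl. Csolve. rewrite IHn. generalize (Csum n F) (Csum n G) (F n) (G n). intros. Csolve. Qed.

Lemma Csum_scal z n F : Cmul z (Csum n F) = Csum n (fun j => Cmul z (F j)).
Proof. induction n; simpl. Csolve. rewrite <- IHn. generalize (Csum n F) (F n). intros. Csolve. Qed.

Lemma Csum_scal_r z n F : Cmul (Csum n F) z = Csum n (fun j => Cmul (F j) z).
Proof. induction n; simpl. Csolve. rewrite <- IHn. generalize (Csum n F) (F n). intros. Csolve. Qed.

Lemma Csum_swap n m F : Csum n (fun i => Csum m (fun j => F i j)) = Csum m (fun j => Csum n (fun i => F i j)).
Proof. induction n; simpl. rewrite Csum_zero; auto. rewrite IHn. rewrite <- Csum_add. auto. Qed.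

Lemma Csum_single n F j0 : (forall j, (j < n)%nat -> j <> j0 -> F j = C0) -> (j0 < n)%nat -> Csum n F = F j0.
Proof. induction n; intros H Hj; simpl. lia. destruct (Nat.eq_dec j0 n).
  subst. rewrite Csum_zero. apply Cadd_0_l. intros; apply H; lia.
  rewrite H by lia. rewrite Cadd_0_r. apply IHn; [intros; apply H; lia | lia]. Qed.

Lemma Csum_shift1 n F : Cadd (Csum n (fun q => F (S q))) (F O) = Cadd (Csum n F) (F n).
Proof. induction n; simpl. Csolve. rewrite <- IHn. generalize (Csum n (fun q => F (S q))) (F O) (F (S n)) (F n). intros. Csolve. Qed.

Lemma Csum_periodic L h k : (forall q, h (q + L)%nat = h q) -> Csum L (fun q => h (q + k)%nat) = Csum L h.
Proof. intros Hp. induction k.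
  apply Csum_ext; intros; f_equal; lia.
  rewrite <- IHk.
  assert (E: Cadd (Csum L (fun q => h (S q + k)%nat)) (h (0+k)%nat) = Cadd (Csum L (fun q => h (q + k)%nat)) (h (L+k)%nat)) by (apply (Csum_shift1 L (fun q => h (q+k)%nat))).
  replace (h (L+k)%nat) with (h (0+k)%nat) in E by (rewrite <- (Hp (0+k)%nat); f_equal; lia).
  replace (Csum L (fun q => h (q + S k)%nat)) with (Csum L (fun q => h (S q + k)%nat)) by (apply Csum_ext; intros; f_equal; lia).
  revert E. generalize (Csum L (fun q => h (S q + k)%nat)) (Csum L (fun q => h (q + k)%nat)) (h (0+k)%nat).
  intros. Csolve. injection E; intros; f_equal; lra. Qed.

Lemma Cmul_eq0 z w : Cmul z w = C0 -> z = C0 \/ w = C0.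
Proof. destruct z as [a b], w as [c e]. unfold Cmul, C0; simpl. intros H. injection H; intros H1 H2.
  destruct (Req_dec (a*a + b*b) 0) as [Hz|Hz].
  left. assert (a = 0) by nra. assert (b = 0) by nra. subst; auto.
  right. assert (HA: (a*a+b*b)*c = 0). { replace ((a*a+b*b)*c) with (a*(a*c-b*e) + b*(a*e+b*c)) by ring. rewrite H1, H2; ring. }
  assert (HB: (a*a+b*b)*e = 0). { replace ((a*a+b*b)*e) with (a*(a*e+b*c) - b*(a*c-b*e)) by ring. rewrite H1, H2; ring. }
  apply Rmult_integral in HA. apply Rmult_integral in HB. destruct HA, HB; try lra; subst; auto. Qed.

Lemma Csum_const n z : Csum n (fun _ => z) = (INR n * fst z, INR n * snd z).
Proof. induction n; simpl. Csolve. rewrite IHn. destruct n; simpl; Csolve. Qed.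

Definition W (L : nat) (t : R) : Defs.C := Cexpi (2 * PI * t / INR L).

Lemma Cexpi_add x y : Cmul (Cexpi x) (Cexpi y) = Cexpi (x + y).
Proof. unfold Cmul, Cexpi; simpl. rewrite cos_plus, sin_plus. f_equal; ring. Qed.

Lemma W_add L a b : Cmul (W L a) (W L b) = W L (a + b).
Proof. unfold W. rewrite Cexpi_add. f_equal. unfold Rdiv; ring. Qed.

Lemma W_conj L t : Cconj (W L t) = W L (- t).
Proof. unfold W, Cexpi, Cconj; simpl. replace (2 * PI * - t / INR L) with (- (2 * PI * t / INR L)) by (unfold Rdiv; ring).
  rewrite cos_neg, sin_neg. auto. Qed.

Lemma W_period L t k : (L <> 0)%nat -> W L (t + INR L * INR k) = W L t.
Proof. intros HL. unfold W, Cexpi. assert (INR L <> 0) by (apply not_0_INR; auto).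
  replace (2 * PI * (t + INR L * INR k) / INR L) with (2 * PI * t / INR L + 2 * INR k * PI) by (field; auto).
  rewrite cos_period, sin_period. auto. Qed.

Lemma W_0 L : W L 0 = (1, 0).
Proof. unfold W, Cexpi. replace (2 * PI * 0 / INR L) with 0 by (unfold Rdiv; ring). rewrite cos_0, sin_0. auto. Qed.

Lemma W_nat_mod L n a : (L <> 0)%nat -> W L (INR n * INR (a mod L)) = W L (INR n * INR a).
Proof. intros HL. pose proof (Nat.div_mod_eq a L) as E.
  replace (INR n * INR a) with (INR n * INR (a mod L) + INR L * INR (n * (a / L))).
  symmetry; apply W_period; auto.
  assert (EA: INR a = INR (L * (a / L) + a mod L)) by (f_equal; exact E). rewrite EA. rewrite plus_INR, !mult_INR. ring. Qed.

Lemma W_ne1 L n n0 : (n < L)%nat -> (n0 < L)%nat -> n <> n0 -> W L (INR n - INR n0) <> (1, 0).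
Proof. intros Hn Hn0 Hne HW. unfold W, Cexpi in HW. injection HW; intros _ Hc.
  set (a := PI * (INR n - INR n0) / INR L).
  assert (HL: 0 < INR L) by (apply lt_0_INR; lia).
  replace (2 * PI * (INR n - INR n0) / INR L) with (2 * a) in Hc by (unfold a; field; lra).
  rewrite cos_2a_sin in Hc. assert (Hs: sin a = 0) by nra.
  assert (Hn1: INR n < INR L) by (apply lt_INR; auto).
  assert (Hn2: INR n0 < INR L) by (apply lt_INR; auto).
  assert (P0 := PI_RGT_0).
  destruct (lt_dec n n0) as [Hlt|Hlt].
  - assert (H1: INR n < INR n0) by (apply lt_INR; auto). assert (Hn3: 0 <= INR n) by apply pos_INR.
    assert (0 < - a < PI). { unfold a. split.
      replace (- (PI * (INR n - INR n0) / INR L)) with (PI * ((INR n0 - INR n) / INR L)) by (field; lra).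
      apply Rmult_lt_0_compat; auto. apply Rdiv_lt_0_compat; lra.
      replace (- (PI * (INR n - INR n0) / INR L)) with (PI * ((INR n0 - INR n) / INR L)) by (field; lra).
      rewrite <- (Rmult_1_r PI) at 2. apply Rmult_lt_compat_l; auto. apply Rmult_lt_reg_r with (INR L); [lra| unfold Rdiv; rewrite Rmult_assoc, Rinv_l; lra]. }
    pose proof (sin_gt_0 (-a) ltac:(lra) ltac:(lra)). rewrite sin_neg in H0. lra.
  - assert (H1: INR n0 < INR n) by (apply lt_INR; lia). assert (Hn3: 0 <= INR n0) by apply pos_INR.
    assert (0 < a < PI). { unfold a. split.
      replace (PI * (INR n - INR n0) / INR L) with (PI * ((INR n - INR n0) / INR L)) by (field; lra).
      apply Rmult_lt_0_compat; auto. apply Rdiv_lt_0_compat; lra.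
      replace (PI * (INR n - INR n0) / INR L) with (PI * ((INR n - INR n0) / INR L)) by (field; lra).
      rewrite <- (Rmult_1_r PI) at 2. apply Rmult_lt_compat_l; auto. apply Rmult_lt_reg_r with (INR L); [lra| unfold Rdiv; rewrite Rmult_assoc, Rinv_l; lra]. }
    pose proof (sin_gt_0 a ltac:(lra) ltac:(lra)). lra.
Qed.

Definition Orth L r := Csum L (fun m => W L (r * INR m)).

Lemma orth_0 L : Orth L 0 = (INR L, 0).
Proof. unfold Orth. rewrite (Csum_ext L _ (fun _ => (1,0))). rewrite Csum_const. simpl; f_equal; ring.
  intros. rewrite Rmult_0_l. apply W_0. Qed.

Lemma orth_ne L n n0 : (n < L)%nat -> (n0 < L)%nat -> n <> n0 -> Orth L (INR n - INR n0) = C0.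
Proof. intros Hn Hn0 Hne. set (r := INR n - INR n0). set (z := W L r). unfold Orth.
  set (Sm := Csum L (fun m => W L (r * INR m))).
  assert (HL : (L <> 0)%nat) by lia.
  pose proof (Csum_shift1 L (fun m => W L (r * INR m))) as E. cbv beta in E. fold Sm in E.
  rewrite (Csum_ext L _ (fun q => Cmul z (W L (r * INR q)))) in E.
  2:{ intros. unfold z. rewrite W_add. f_equal. rewrite S_INR. ring. }
  rewrite <- Csum_scal in E. fold Sm in E.
  change (INR 0) with 0 in E.
  replace (W L (r * 0)) with ((1,0) : Defs.C) in E by (rewrite Rmult_0_r, W_0; auto).
  replace (W L (r * INR L)) with ((1,0) : Defs.C) in E.
  2:{ replace (r * INR L) with (0 + INR L * INR n + - (INR L * INR n0)) by (unfold r; ring).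
      rewrite <- W_add. rewrite W_period by auto. rewrite W_0.
      replace (- (INR L * INR n0)) with (- (INR L * INR n0)) by auto.
      pose proof (W_period L (- (INR L * INR n0)) n0 HL) as P.
      replace (- (INR L * INR n0) + INR L * INR n0) with 0 in P by ring. rewrite W_0 in P.
      rewrite <- P. unfold Cmul; simpl; f_equal; ring. }
  assert (Hz: Cmul (Cadd z (-1, 0)) Sm = C0).
  { revert E. generalize z Sm. intros z0 S0. Csolve. intros E. injection E; intros. f_equal; lra. }
  apply Cmul_eq0 in Hz. destruct Hz as [Hz|Hz]; auto.
  exfalso. apply (W_ne1 L n n0); auto. fold r. fold z. revert Hz. generalize z. intros. Csolve. injection Hz; intros; f_equal; lra.
Qed.

Definition Gf L m xi (c c' : cvec) : Defs.C :=
  Csum L (fun j => Cmul (Cmul (c ((j + m) mod L)%nat) (Cconj (c' j))) (W L (- (INR xi * INR j)))).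

Lemma tf_eq L k n c p : tfshift L k n c p = Cmul (W L (INR n * INR p)) (c (((p mod L) + L - (k mod L)) mod L)%nat).
Proof. unfold tfshift, Mmod, Tshift, W. f_equal. f_equal. unfold Rdiv; ring. Qed.

Lemma Cconj_mul z w : Cconj (Cmul z w) = Cmul (Cconj z) (Cconj w).
Proof. Csolve. Qed.

Lemma mod_idx1 L q m k : (L <> 0)%nat -> (k < L)%nat ->
  ((((q + m) mod L) mod L) + L - (k mod L)) mod L = (q + m + L - k) mod L.
Proof. intros HL Hk. rewrite Nat.Div0.mod_mod. rewrite (Nat.mod_small k) by auto.
  replace ((q + m) mod L + L - k)%nat with ((q + m) mod L + (L - k))%nat by lia.
  rewrite Nat.Div0.add_mod_idemp_l. f_equal; lia. Qed.

Lemma mod_idx2 L q k : (L <> 0)%nat -> (k < L)%nat -> (q < L)%nat ->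
  ((q mod L) + L - (k mod L)) mod L = (q + L - k) mod L.
Proof. intros HL Hk Hq. rewrite (Nat.mod_small k) by auto. rewrite (Nat.mod_small q) by auto. auto. Qed.

Lemma modL_add L a : (L <> 0)%nat -> ((a + L) mod L = a mod L)%nat.
Proof. intros. replace (a + L)%nat with (a + 1 * L)%nat by lia. apply Nat.Div0.mod_add. Qed.

Section PA.
Variable L : nat.
Hypothesis HL : (1 <= L)%nat.
Variable c : cvec.
Variable a : nat -> nat -> Defs.C.

Definition Eq p q := Csum L (fun k => Csum L (fun n =>
         Cmul (a k n) (Cmul (tfshift L k n c p) (Cconj (tfshift L k n c q))))).

Definition Ahat m eta := Csum L (fun k => Csum L (fun n =>
   Cmul (a k n) (Cmul (W L (INR n * INR m)) (W L (- (INR eta * INR k)))))).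

Definition hh m eta k q := Cmul (W L (- (INR eta * INR q)))
   (Cmul (c ((q + m + L - k) mod L)%nat) (Cconj (c ((q + L - k) mod L)%nat))).

Lemma hh_sum m eta k : (k < L)%nat -> Csum L (hh m eta k) = Cmul (W L (- (INR eta * INR k))) (Gf L m eta c c).
Proof. intros Hk. assert (HL0: (L <> 0)%nat) by lia.
  rewrite <- (Csum_periodic L (hh m eta k) k).
  - unfold Gf. rewrite Csum_scal. apply Csum_ext. intros j Hj. unfold hh.
    replace ((j + k + m + L - k) mod L)%nat with ((j + m) mod L)%nat
      by (replace (j + k + m + L - k)%nat with (j + m + 1 * L)%nat by lia; rewrite Nat.Div0.mod_add; auto).
    replace ((j + k + L - k) mod L)%nat with j
      by (replace (j + k + L - k)%nat with (j + 1 * L)%nat by lia; rewrite Nat.Div0.mod_add; rewrite Nat.mod_small; auto).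
    replace (W L (- (INR eta * INR (j + k)))) with (Cmul (W L (- (INR eta * INR k))) (W L (- (INR eta * INR j)))).
    2:{ rewrite W_add. f_equal. rewrite plus_INR. ring. }
    generalize (W L (- (INR eta * INR k))) (W L (- (INR eta * INR j))) (c ((j + m) mod L)%nat) (c j). intros. Csolve.
  - intros q. unfold hh.
    replace ((q + L + m + L - k) mod L)%nat with ((q + m + L - k) mod L)%nat
      by (replace (q + L + m + L - k)%nat with ((q + m + L - k) + 1 * L)%nat by lia; rewrite Nat.Div0.mod_add; auto).
    replace ((q + L + L - k) mod L)%nat with ((q + L - k) mod L)%nat
      by (replace (q + L + L - k)%nat with ((q + L - k) + 1 * L)%nat by lia; rewrite Nat.Div0.mod_add; auto).
    f_equal. rewrite <- (W_period L (- (INR eta * INR (q + L))) eta HL0). f_equal. rewrite plus_INR. ring.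
Qed.

Lemma S_eq m eta : (m < L)%nat -> (eta < L)%nat ->
  Csum L (fun q => Cmul (W L (- (INR eta * INR q))) (Eq ((q + m) mod L)%nat q))
  = Cmul (Gf L m eta c c) (Ahat m eta).
Proof. intros Hm He. assert (HL0: (L <> 0)%nat) by lia. unfold Eq, Ahat.
  transitivity (Csum L (fun k => Csum L (fun n => Cmul (Cmul (a k n) (W L (INR n * INR m))) (Cmul (W L (- (INR eta * INR k))) (Gf L m eta c c))))).
  2:{ rewrite Csum_scal. apply Csum_ext; intros. rewrite Csum_scal. apply Csum_ext; intros.
      generalize (a j0 j) (W L (INR j * INR m)) (W L (- (INR eta * INR j0))) (Gf L m eta c c). intros. Csolve. }
  match goal with |- _ = ?R => set (RR := R) end.
  rewrite (Csum_ext L _ (fun q => Csum L (fun k => Cmul (W L (- (INR eta * INR q)))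
      (Csum L (fun n => Cmul (a k n) (Cmul (tfshift L k n c ((q + m) mod L)%nat) (Cconj (tfshift L k n c q)))))))).
  2:{ intros q Hq. rewrite Csum_scal. auto. }
  rewrite Csum_swap. unfold RR. apply Csum_ext. intros k Hk.
  rewrite (Csum_ext L _ (fun q => Csum L (fun n => Cmul (W L (- (INR eta * INR q)))
      (Cmul (a k n) (Cmul (tfshift L k n c ((q + m) mod L)%nat) (Cconj (tfshift L k n c q))))))).
  2:{ intros q Hq. rewrite Csum_scal. auto. }
  rewrite Csum_swap. apply Csum_ext. intros n Hn.
  rewrite (Csum_ext L _ (fun q => Cmul (Cmul (a k n) (W L (INR n * INR m))) (hh m eta k q))).
  2:{ intros q Hq. unfold hh. rewrite !tf_eq. rewrite mod_idx1 by auto. rewrite mod_idx2 by auto.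
      rewrite W_nat_mod by auto. rewrite Cconj_mul, W_conj.
      replace (W L (INR n * INR m)) with (Cmul (W L (INR n * INR (q + m))) (W L (- (INR n * INR q)))).
      2:{ rewrite W_add. f_equal. rewrite plus_INR. ring. }
      generalize (W L (INR n * INR (q + m))) (W L (- (INR n * INR q))) (W L (- (INR eta * INR q)))
        (c ((q + m + L - k) mod L)%nat) (Cconj (c ((q + L - k) mod L)%nat)) (a k n). intros. Csolve. }
  rewrite <- Csum_scal. rewrite hh_sum by auto. auto.
Qed.

Lemma inversion : (forall m eta, (m < L)%nat -> (eta < L)%nat -> Ahat m eta = C0) ->
  forall k0 n0, (k0 < L)%nat -> (n0 < L)%nat -> a k0 n0 = C0.
Proof. intros HA k0 n0 Hk0 Hn0.
  assert (T0: Csum L (fun m => Csum L (fun eta => Cmul (Cmul (W L (- (INR n0 * INR m))) (W L (INR eta * INR k0))) (Ahat m eta))) = C0).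
  { apply Csum_zero; intros. apply Csum_zero; intros. rewrite HA by auto. apply Cmul_0_r. }
  assert (T1: Csum L (fun m => Csum L (fun eta => Cmul (Cmul (W L (- (INR n0 * INR m))) (W L (INR eta * INR k0))) (Ahat m eta)))
     = Csum L (fun k => Csum L (fun n => Cmul (a k n) (Cmul (Orth L (INR n - INR n0)) (Orth L (INR k0 - INR k)))))).
  { match goal with |- _ = ?R => set (RR := R) end. unfold Ahat.
    rewrite (Csum_ext L _ (fun m => Csum L (fun eta => Csum L (fun k => Csum L (fun n =>
       Cmul (Cmul (W L (- (INR n0 * INR m))) (W L (INR eta * INR k0)))
        (Cmul (a k n) (Cmul (W L (INR n * INR m)) (W L (- (INR eta * INR k)))))))))).
    2:{ intros. apply Csum_ext; intros. rewrite Csum_scal. apply Csum_ext; intros. rewrite Csum_scal. auto. }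
    rewrite (Csum_ext L _ (fun m => Csum L (fun k => Csum L (fun eta => Csum L (fun n =>
       Cmul (Cmul (W L (- (INR n0 * INR m))) (W L (INR eta * INR k0)))
        (Cmul (a k n) (Cmul (W L (INR n * INR m)) (W L (- (INR eta * INR k)))))))))).
    2:{ intros. apply Csum_swap. }
    rewrite Csum_swap. unfold RR. apply Csum_ext. intros k Hk.
    rewrite (Csum_ext L _ (fun m => Csum L (fun n => Csum L (fun eta =>
       Cmul (Cmul (W L (- (INR n0 * INR m))) (W L (INR eta * INR k0)))
        (Cmul (a k n) (Cmul (W L (INR n * INR m)) (W L (- (INR eta * INR k))))))))).
    2:{ intros. apply Csum_swap. }
    rewrite Csum_swap. apply Csum_ext. intros n Hn.
    unfold Orth. rewrite Csum_scal_r, Csum_scal. apply Csum_ext. intros m Hm.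
    rewrite Csum_scal, Csum_scal. apply Csum_ext. intros eta He.
    replace (W L ((INR n - INR n0) * INR m)) with (Cmul (W L (INR n * INR m)) (W L (- (INR n0 * INR m))))
      by (rewrite W_add; f_equal; ring).
    replace (W L ((INR k0 - INR k) * INR eta)) with (Cmul (W L (INR eta * INR k0)) (W L (- (INR eta * INR k))))
      by (rewrite W_add; f_equal; ring).
    generalize (W L (INR n * INR m)) (W L (- (INR n0 * INR m))) (W L (INR eta * INR k0)) (W L (- (INR eta * INR k))) (a k n).
    intros. Csolve. }
  rewrite T1 in T0.
  rewrite (Csum_single L _ k0) in T0; auto.
  2:{ intros k Hk Hne. apply Csum_zero. intros n Hn. rewrite (orth_ne L k0 k) by auto. rewrite Cmul_0_r. apply Cmul_0_r. }
  rewrite (Csum_single L _ n0) in T0; auto.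
  2:{ intros n Hn Hne. rewrite (orth_ne L n n0) by auto. rewrite Cmul_0_l. apply Cmul_0_r. }
  rewrite Rminus_diag, Rminus_diag, orth_0 in T0.
  apply Cmul_eq0 in T0. destruct T0 as [T0|T0]; auto.
  exfalso. apply Cmul_eq0 in T0. assert (0 < INR L) by (apply lt_0_INR; lia).
  destruct T0 as [T0|T0]; unfold C0 in T0; injection T0; intros; lra.
Qed.

Lemma partA_core : (forall m eta, (m < L)%nat -> (eta < L)%nat -> Gf L m eta c c <> C0) ->
  (forall p q, (p < L)%nat -> (q < L)%nat -> Eq p q = C0) ->
  forall k0 n0, (k0 < L)%nat -> (n0 < L)%nat -> a k0 n0 = C0.
Proof. intros HG HE. apply inversion. intros m eta Hm He.
  pose proof (S_eq m eta Hm He) as E.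
  rewrite Csum_zero in E. 2:{ intros q Hq. rewrite HE. apply Cmul_0_r. apply Nat.mod_upper_bound; lia. auto. }
  symmetry in E. apply Cmul_eq0 in E. destruct E as [E|E]; auto. exfalso; apply (HG m eta); auto.
Qed.

End PA.

Lemma partA L (HL : (1 <= L)%nat) (c : cvec) :
  ~ diag_permissible L c -> exists m xi, (m < L)%nat /\ (xi < L)%nat /\ Gf L m xi c c = C0.
Proof. intros Hn. apply NNPP. intros Hc. apply Hn. unfold diag_permissible. intros a H.
  apply (partA_core L HL c a).
  - intros m eta Hm He HG. apply Hc. exists m, eta. auto.
  - intros p q Hp Hq. apply H; auto.
Qed.

Fixpoint sumL {A} (v : A -> R) (l : list A) : R :=
  match l with nil => 0 | a :: l => v a + sumL v l end.

Lemma sumL_app {A} (v : A -> R) l1 l2 : sumL v (l1 ++ l2) = sumL v l1 + sumL v l2.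
Proof. induction l1; simpl; [ring| rewrite IHl1; ring]. Qed.

Lemma sumL_map {A B} (v : B -> R) (f : A -> B) l : sumL v (map f l) = sumL (fun a => v (f a)) l.
Proof. induction l; simpl; auto. rewrite IHl; auto. Qed.

Lemma Rsum_sumL m f : Rsum_n m f = sumL f (seq 0 m).
Proof. induction m; [reflexivity|]. change (Rsum_n (S m) f) with (Rsum_n m f + f m). rewrite seq_S, sumL_app, IHm. simpl. ring. Qed.

Lemma sumL_ext {A} (v w : A -> R) l : (forall a, In a l -> v a = w a) -> sumL v l = sumL w l.
Proof. induction l; simpl; intros; auto. rewrite H, IHl; auto. Qed.

Lemma sumL_le {A} (v w : A -> R) l : (forall a, In a l -> v a <= w a) -> sumL v l <= sumL w l.
Proof. induction l; simpl; intros; [lra|]. pose proof (H a (or_introl eq_refl)). pose proof (IHl (fun b Hb => H b (or_intror Hb))). lra. Qed.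

Lemma sumL_nonneg {A} (v : A -> R) l : (forall a, 0 <= v a) -> 0 <= sumL v l.
Proof. induction l; simpl; intros; [lra|]. pose proof (H a). pose proof (IHl H). lra. Qed.

Lemma incl_sum {A} (v : A -> R) (l1 l2 : list A) : (forall a, 0 <= v a) -> NoDup l1 -> incl l1 l2 -> sumL v l1 <= sumL v l2.
Proof. intros Hv. revert l2. induction l1 as [|a l1 IH]; intros l2 Hnd Hi; simpl.
  - apply sumL_nonneg; auto.
  - assert (Ha: In a l2) by (apply Hi; left; auto). apply in_split in Ha. destruct Ha as [la [lb Hl]]. subst l2.
    rewrite sumL_app. simpl. inversion Hnd; subst.
    assert (sumL v l1 <= sumL v (la ++ lb)).
    { apply IH; auto. intros y Hy. assert (In y (la ++ a :: lb)) by (apply Hi; right; auto).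
      apply in_app_or in H. apply in_or_app. destruct H as [H|H]; auto. destruct H; subst; auto. tauto. }
    rewrite sumL_app in H. lra.
Qed.

Lemma sumL_prod {A B} (v : A * B -> R) l1 l2 : sumL v (list_prod l1 l2) = sumL (fun a => sumL (fun b => v (a, b)) l2) l1.
Proof. induction l1; simpl; auto. rewrite sumL_app, IHl1, sumL_map. auto. Qed.

Lemma Rprod_nonneg d f : (forall i, (i < d)%nat -> 0 <= f i) -> 0 <= Rprod_n d f.
Proof. induction d; simpl; intros; [lra|]. apply Rmult_le_pos; [apply IHd|apply H]; intros; try apply H; lia. Qed.

Lemma geom_sum eps m : Rsum_n m (fun n => eps / 2 ^ (S n)) = eps - eps / 2 ^ m.
Proof. induction m. simpl. field. change (Rsum_n (S m) (fun n => eps / 2 ^ (S n))) with (Rsum_n m (fun n => eps / 2 ^ (S n)) + eps / 2 ^ (S m)).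
  rewrite IHm. simpl. field. apply pow_nonzero; lra. Qed.

Lemma null_subset d (A B : (nat -> R) -> Prop) : lebesgue_null d B -> (forall x, A x -> B x) -> lebesgue_null d A.
Proof. intros HB Hs eps He. destruct (HB eps He) as [lo [hi [H1 [H2 H3]]]]. exists lo, hi. repeat split; auto. Qed.

Lemma Rprod_zero d : (1 <= d)%nat -> Rprod_n d (fun _ => 0) = 0.
Proof. destruct d; [lia|]. simpl. intros; ring. Qed.

Lemma null_empty d (A : (nat -> R) -> Prop) : (1 <= d)%nat -> (forall x, ~ A x) -> lebesgue_null d A.
Proof. intros Hd HA eps He. exists (fun _ _ => 0), (fun _ _ => 0). split; [|split].
  - intros; lra.
  - intros m. rewrite Rsum_sumL. rewrite (sumL_ext _ (fun _ => 0)). 2:{ intros. replace (fun _ => 0 - 0) with (fun _ : nat => 0) by (apply FunctionalExtensionality.functional_extensionality; intros; ring). apply Rprod_zero; auto. }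
    assert (Z: forall l, sumL (fun _ : nat => 0) l = 0) by (induction l; simpl; lra). rewrite Z; lra.
  - intros y Hy. exfalso; apply (HA y Hy).
Qed.

Lemma null_cunion d (A : nat -> (nat -> R) -> Prop) (B : (nat -> R) -> Prop) :
  (forall n, lebesgue_null d (A n)) -> (forall x, B x -> exists n, A n x) -> lebesgue_null d B.
Proof. intros HA HB eps He.
  assert (Hc: forall n, exists p : (nat -> nat -> R) * (nat -> nat -> R),
     (forall j i, (i < d)%nat -> fst p j i <= snd p j i) /\
     (forall m, Rsum_n m (fun j => Rprod_n d (fun i => snd p j i - fst p j i)) <= eps / 2 ^ (S n)) /\
     (forall x, A n x -> exists j, forall i, (i < d)%nat -> fst p j i <= x i <= snd p j i)).
  { intros n. assert (Hp: 0 < eps / 2 ^ (S n)) by (apply Rdiv_lt_0_compat; auto; apply pow_lt; lra).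
    destruct (HA n _ Hp) as [lo [hi H]]. exists (lo, hi). exact H. }
  destruct (choice _ Hc) as [P HP].
  set (V := fun (nj : nat * nat) => Rprod_n d (fun i => snd (P (fst nj)) (snd nj) i - fst (P (fst nj)) (snd nj) i)).
  assert (HV: forall nj, 0 <= V nj). { intros [n j]. unfold V. apply Rprod_nonneg. intros i Hi. destruct (HP n) as [H1 _]. specialize (H1 j i Hi). simpl. lra. }
  exists (fun j i => fst (P (fst (of_nat j))) (snd (of_nat j)) i), (fun j i => snd (P (fst (of_nat j))) (snd (of_nat j)) i).
  repeat split.
  - intros j i Hi. destruct (HP (fst (of_nat j))) as [H1 _]. apply H1; auto.
  - intros m. rewrite Rsum_sumL.
    change (sumL (fun j => V (of_nat j)) (seq 0 m) <= eps).
    rewrite <- sumL_map.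
    apply Rle_trans with (sumL V (list_prod (seq 0 m) (seq 0 m))).
    + apply incl_sum; auto.
      * apply NoDup_map_NoDup_ForallPairs. intros x y _ _ Hxy. rewrite <- (cancel_to_of x), <- (cancel_to_of y), Hxy; auto. apply seq_NoDup.
      * intros p Hp. apply in_map_iff in Hp. destruct Hp as [j [Hj1 Hj2]]. apply in_seq in Hj2.
        destruct p as [x y]. pose proof (to_nat_non_decreasing x y) as Hb. rewrite <- Hj1 in Hb. rewrite cancel_to_of in Hb.
        apply in_prod; apply in_seq; lia.
    + rewrite sumL_prod. apply Rle_trans with (sumL (fun n => eps / 2 ^ (S n)) (seq 0 m)).
      * apply sumL_le. intros n _. destruct (HP n) as [_ [H2 _]]. specialize (H2 m). rewrite Rsum_sumL in H2. unfold V. simpl. exact H2.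
      * rewrite <- Rsum_sumL, geom_sum. assert (0 < eps / 2 ^ m) by (apply Rdiv_lt_0_compat; auto; apply pow_lt; lra). lra.
  - intros x Hx. destruct (HB x Hx) as [n Hn]. destruct (HP n) as [_ [_ H3]]. destruct (H3 x Hn) as [j Hj].
    exists (to_nat (n, j)). rewrite cancel_of_to. simpl. auto.
Qed.

Lemma Rabs_le_inv x b : Rabs x <= b -> -b <= x <= b.
Proof. unfold Rabs; destruct (Rcase_abs x); lra. Qed.

Fixpoint gridl (M : nat) (ks : list nat) : list (nat -> nat) :=
  match ks with
  | nil => (fun _ => 0%nat) :: nil
  | k :: ks' => flat_map (fun f => map (fun e => fun j => if Nat.eqb j k then e else f j) (seq 0 M)) (gridl M ks')
  end.

Lemma flat_map_len_const {A B} (g : A -> list B) l M : (forall a, length (g a) = M) -> length (flat_map g l) = (M * length l)%nat.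
Proof. intros H. induction l; simpl; auto. rewrite length_app, IHl, H. lia. Qed.

Lemma gridl_len M ks : length (gridl M ks) = (M ^ length ks)%nat.
Proof. induction ks; simpl; auto. rewrite (flat_map_len_const _ _ M). rewrite IHks; auto.
  intros; rewrite length_map, length_seq; auto. Qed.

Lemma grid_exists M ks (P : nat -> nat -> Prop) :
  (forall k, In k ks -> exists v, (v < M)%nat /\ P k v) ->
  exists f, In f (gridl M ks) /\ forall k, In k ks -> P k (f k).
Proof. induction ks as [|k ks IH]; intros H.
  - exists (fun _ => 0%nat). simpl. split; [auto | intros k []].
  - destruct IH as [f [Hf1 Hf2]]. intros; apply H; right; auto.
    destruct (H k (or_introl eq_refl)) as [v [Hv1 Hv2]].
    exists (fun j => if Nat.eqb j k then v else f j). split.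
    + simpl. apply in_flat_map. exists f. split; auto. apply in_map_iff. exists v. split; auto. apply in_seq; lia.
    + intros k' Hk'. destruct (Nat.eqb_spec k' k). subst; auto. destruct Hk'. subst; tauto. apply Hf2; auto.
Qed.

Lemma Rprod_ext d f g : (forall i, (i < d)%nat -> f i = g i) -> Rprod_n d f = Rprod_n d g.
Proof. induction d; simpl; intros H; auto. rewrite IHd, H; [auto|lia|intros; apply H; lia]. Qed.

Lemma Rprod_const n b : Rprod_n n (fun _ => b) = b ^ n.
Proof. induction n; simpl; [auto|rewrite IHn; ring]. Qed.

Lemma Rprod_pick d i a b : (i < d)%nat -> Rprod_n d (fun k => if Nat.eqb k i then a else b) = a * b ^ (d - 1).
Proof. induction d; intros Hi; [lia|]. simpl Rprod_n. destruct (Nat.eqb_spec d i).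
  - subst. rewrite (Rprod_ext _ _ (fun _ => b)). 2:{ intros k Hk. destruct (Nat.eqb_spec k i); auto; lia. }
    replace (S i - 1)%nat with i by lia. rewrite Rprod_const. ring.
  - rewrite IHd by lia. replace (S d - 1)%nat with (S (d - 1)) by lia. simpl. ring.
Qed.


Lemma filter_len_aux d i : length (filter (fun k => negb (Nat.eqb k i)) (seq 0 d)) = (if Nat.ltb i d then d - 1 else d)%nat.
Proof. induction d. simpl; auto. rewrite seq_S, filter_app, length_app, IHd, Nat.add_0_l.
  assert (E: length (filter (fun k => negb (Nat.eqb k i)) (d :: nil)) = if Nat.eqb d i then 0%nat else 1%nat)
    by (simpl; destruct (Nat.eqb d i); auto).
  rewrite E. destruct (Nat.eqb_spec d i); destruct (Nat.ltb_spec i d); destruct (Nat.ltb_spec i (S d)); lia. Qed.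

Lemma digit M r : (1 <= M)%nat -> 0 <= r <= INR M -> exists e, (e < M)%nat /\ INR e <= r <= INR e + 1.
Proof. induction M; intros HM Hr; [lia|]. destruct (Nat.eq_dec M 0).
  - subst. exists 0%nat. split; [lia|]. simpl in *. lra.
  - destruct (Rle_dec r (INR M)).
    + assert (HH: (1 <= M)%nat) by lia. assert (HH2: 0 <= r <= INR M) by lra. destruct (IHM HH HH2) as [e [He1 He2]]. exists e; split; auto; lia.
    + exists M. rewrite S_INR in Hr. split; [lia|lra].
Qed.

Lemma Rsum_ind_le m len V : 0 <= V -> Rsum_n m (fun j => if Nat.ltb j len then V else 0) <= INR len * V.
Proof. intros HV. assert (Rsum_n m (fun j => if Nat.ltb j len then V else 0) = INR (Nat.min m len) * V).
  { induction m. simpl; ring. change (Rsum_n (S m) (fun j => if Nat.ltb j len then V else 0)) with (Rsum_n m (fun j => if Nat.ltb j len then V else 0) + (if Nat.ltb m len then V else 0)).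
    rewrite IHm. destruct (Nat.ltb_spec m len).
    - replace (Nat.min (S m) len) with (S (Nat.min m len)) by lia. rewrite S_INR. ring.
    - replace (Nat.min (S m) len) with (Nat.min m len) by lia. ring. }
  rewrite H. apply Rmult_le_compat_r; auto. apply le_INR. lia. Qed.

Definition inbox d i (N s : R) (f : nat -> nat) (x : nat -> R) :=
  forall k, (k < d)%nat -> k <> i -> -N + INR (f k) * s <= x k <= -N + INR (f k) * s + s.

Lemma grid_null d i (A : (nat -> R) -> Prop) (N C : R) : (i < d)%nat -> 0 < N -> 0 <= C ->
  (forall x, A x -> forall k, (k < d)%nat -> k <> i -> Rabs (x k) <= N) ->
  (forall x x' s, A x -> A x' -> 0 <= s -> (forall k, (k < d)%nat -> k <> i -> Rabs (x k - x' k) <= s) -> Rabs (x i - x' i) <= C * s) ->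
  lebesgue_null d A.
Proof. intros Hi HN HC Hb Hl eps He.
  destruct (INR_unbounded (2 * C * (2 * N) ^ d / eps)) as [M0 HM0].
  set (M := S M0). assert (HMpos: 0 < INR M) by (apply lt_0_INR; unfold M; lia).
  assert (HM: 2 * C * (2 * N) ^ d / eps < INR M) by (unfold M; rewrite S_INR; lra).
  set (s := 2 * N / INR M). assert (Hs: 0 < s) by (unfold s; apply Rdiv_lt_0_compat; lra).
  set (ks := filter (fun k => negb (Nat.eqb k i)) (seq 0 d)).
  assert (Hks: forall k, In k ks <-> (k < d)%nat /\ k <> i).
  { intros k. unfold ks. rewrite filter_In, in_seq. destruct (Nat.eqb_spec k i); simpl; split; intros; try tauto; try lia; try (split; [lia|auto]). }
  set (G := gridl M ks). set (len := length G).
  set (tval := fun f => (epsilon (inhabits (fun _ : nat => 0)) (fun x => A x /\ inbox d i N s f x)) i).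
  set (fj := fun j => nth j G (fun _ => 0%nat)).
  exists (fun j k => if Nat.ltb j len then (if Nat.eqb k i then tval (fj j) - C * s else -N + INR (fj j k) * s) else 0).
  exists (fun j k => if Nat.ltb j len then (if Nat.eqb k i then tval (fj j) + C * s else -N + INR (fj j k) * s + s) else 0).
  split; [|split].
  - intros j k Hk. destruct (Nat.ltb j len); [|lra]. destruct (Nat.eqb k i); nra.
  - intros m. set (V := 2 * C * s * s ^ (d - 1)).
    apply Rle_trans with (Rsum_n m (fun j => if Nat.ltb j len then V else 0)).
    { right. rewrite !Rsum_sumL. apply sumL_ext. intros j _. destruct (Nat.ltb j len).
      - rewrite (Rprod_ext _ _ (fun k => if Nat.eqb k i then 2 * C * s else s)).
        + apply Rprod_pick; auto.
        + intros k Hk. destruct (Nat.eqb k i); ring.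
      - rewrite (Rprod_ext _ _ (fun _ => 0)). destruct d; [lia|]. simpl; ring. intros; ring. }
    apply Rle_trans with (INR len * V). apply Rsum_ind_le. unfold V. apply Rmult_le_pos; [nra|]. apply pow_le; lra.
    unfold len, G. rewrite gridl_len. unfold ks. rewrite filter_len_aux. destruct (Nat.ltb_spec i d); [|lia].
    rewrite pow_INR. unfold V.
    replace (INR M ^ (d - 1) * (2 * C * s * s ^ (d - 1))) with (2 * C * s * (INR M * s) ^ (d - 1)) by (rewrite Rpow_mult_distr; ring).
    replace (INR M * s) with (2 * N) by (unfold s; field; lra).
    replace (2 * C * s * (2 * N) ^ (d - 1)) with (2 * C * (2 * N) ^ d / INR M).
    2:{ assert (Hp: (2*N)^d = 2*N*(2*N)^(d-1)) by (replace d with (S (d-1)) at 1 by lia; reflexivity). rewrite Hp. unfold s. field. lra. }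
    apply Rmult_lt_compat_r with (r := eps) in HM; auto. unfold Rdiv in HM at 1. rewrite Rmult_assoc, Rinv_l, Rmult_1_r in HM by lra.
    apply Rle_trans with (INR M * eps / INR M). unfold Rdiv. apply Rmult_le_compat_r. left; apply Rinv_0_lt_compat; lra. lra.
    right. field. lra.
  - intros x Hx.
    destruct (grid_exists M ks (fun k v => -N + INR v * s <= x k <= -N + INR v * s + s)) as [f [Hf1 Hf2]].
    { intros k Hk. apply Hks in Hk. destruct Hk as [Hk1 Hk2]. pose proof (Hb x Hx k Hk1 Hk2) as Hxk. apply Rabs_le_inv in Hxk.
      destruct (digit M ((x k + N) / s)) as [e [He1 He2]]. unfold M; lia.
      split. apply Rmult_le_reg_r with s; auto. unfold Rdiv; rewrite Rmult_assoc, Rinv_l; lra.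
      apply Rmult_le_reg_r with s; auto. unfold Rdiv; rewrite Rmult_assoc, Rinv_l by lra. unfold s. field_simplify; lra.
      exists e. split; auto. destruct He2 as [He2 He3].
      apply Rmult_le_compat_r with (r := s) in He2; [|lra]. apply Rmult_le_compat_r with (r := s) in He3; [|lra].
      unfold Rdiv in He2, He3. rewrite Rmult_assoc, Rinv_l, Rmult_1_r in He2, He3 by lra. split; lra. }
    apply In_nth with (d := fun _ => 0%nat) in Hf1. destruct Hf1 as [j [Hj1 Hj2]].
    exists j. intros k Hk. fold len in Hj1. replace (Nat.ltb j len) with true by (symmetry; apply Nat.ltb_lt; auto).
    assert (Hfj: fj j = f) by (unfold fj; auto). rewrite Hfj.
    destruct (Nat.eqb_spec k i).
    + subst k. unfold tval.
      assert (Hin: inbox d i N s f x). { intros k' Hk' Hne. apply Hf2. apply Hks; auto. }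
      pose proof (epsilon_spec (inhabits (fun _ : nat => 0)) (fun x => A x /\ inbox d i N s f x) (ex_intro _ x (conj Hx Hin))) as [Hx' Hin'].
      set (x' := epsilon (inhabits (fun _ : nat => 0)) (fun x => A x /\ inbox d i N s f x)) in *.
      assert (Rabs (x i - x' i) <= C * s).
      { apply Hl; auto. lra. intros k' Hk' Hne. specialize (Hin k' Hk' Hne). specialize (Hin' k' Hk' Hne). apply Rabs_le; lra. }
      apply Rabs_le_inv in H. lra.
    + apply Hf2. apply Hks; auto.
Qed.

Lemma bound_exists (x : nat -> R) d : exists n : nat, forall k, (k < d)%nat -> Rabs (x k) <= INR n.
Proof. induction d. exists 0%nat; intros; lia. destruct IHd as [n1 H1]. destruct (INR_unbounded (Rabs (x d))) as [n2 H2].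
  exists (n1 + n2)%nat. intros k Hk. rewrite plus_INR. pose proof (pos_INR n1). pose proof (pos_INR n2).
  destruct (Nat.eq_dec k d). subst; lra. specialize (H1 k ltac:(lia)). lra. Qed.

Lemma lipgraph d i (A : (nat -> R) -> Prop) : (i < d)%nat ->
  (forall N, 0 < N -> exists C, 0 <= C /\ forall x x' s, A x -> A x' -> 0 <= s ->
     (forall k, (k < d)%nat -> k <> i -> Rabs (x k) <= N /\ Rabs (x' k) <= N /\ Rabs (x k - x' k) <= s) ->
     Rabs (x i - x' i) <= C * s) -> lebesgue_null d A.
Proof. intros Hi H.
  apply (null_cunion d (fun n x => A x /\ forall k, (k < d)%nat -> k <> i -> Rabs (x k) <= INR (S n))).
  - intros n. assert (HN: 0 < INR (S n)) by (apply lt_0_INR; lia).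
    destruct (H _ HN) as [C [HC HL]]. apply (grid_null d i _ (INR (S n)) C); auto.
    + intros x [_ Hx]; auto.
    + intros x x' s [Hx Hbx] [Hx' Hbx'] Hs Hk. apply HL; auto.
  - intros x Hx. destruct (bound_exists x d) as [n Hn]. exists n. split; auto. intros k Hk _.
    specialize (Hn k Hk). rewrite S_INR. lra.
Qed.

Lemma null_union2 d (A B : (nat -> R) -> Prop) : lebesgue_null d A -> lebesgue_null d B -> lebesgue_null d (fun x => A x \/ B x).
Proof. intros HA HB. apply (null_cunion d (fun n => match n with O => A | _ => B end)).
  intros [|n]; auto. intros x [H|H]. exists O; auto. exists 1%nat; auto. Qed.

Definition PolyAll d (F : (nat -> R) -> R) := forall N, 0 <= N -> exists K B, 0 <= K /\
  forall x x' s, 0 <= s -> (forall k, (k < d)%nat -> Rabs (x k) <= N /\ Rabs (x' k) <= N /\ Rabs (x k - x' k) <= s) ->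
  Rabs (F x) <= B /\ Rabs (F x - F x') <= K * s.

Definition PolyI d i (F : (nat -> R) -> R) := forall N, 0 <= N -> exists K B, 0 <= K /\
  forall x x' s, 0 <= s -> (forall k, (k < d)%nat -> k <> i -> Rabs (x k) <= N /\ Rabs (x' k) <= N /\ Rabs (x k - x' k) <= s) ->
  Rabs (F x) <= B /\ Rabs (F x - F x') <= K * s.

Definition upd (x : nat -> R) (i : nat) (t : R) : nat -> R := fun k => if Nat.eqb k i then t else x k.

Lemma polyI_upd d i t F : PolyAll d F -> PolyI d i (fun x => F (upd x i t)).
Proof. intros HF N HN. destruct (HF (Rmax N (Rabs t))) as [K [B [HK H]]]. apply Rle_trans with N; auto. apply Rmax_l.
  exists K, B. split; auto. intros x x' s Hs Hx. apply H; auto. intros k Hk. unfold upd. destruct (Nat.eqb_spec k i).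
  - repeat split; try apply Rmax_r. replace (t - t) with 0 by ring. rewrite Rabs_R0; auto.
  - destruct (Hx k Hk n) as [H1 [H2 H3]]. pose proof (Rmax_l N (Rabs t)). repeat split; auto; lra.
Qed.

Lemma polyI_const d i w : PolyI d i (fun _ => w).
Proof. intros N HN. exists 0, (Rabs w). split; [lra|]. intros. split; [lra|]. replace (w - w) with 0 by ring. rewrite Rabs_R0. lra. Qed.

Lemma aff_null d i F g a : (1 <= d)%nat -> (i < d)%nat -> PolyI d i g -> PolyI d i a ->
  (forall x, F x = g x + x i * a x) -> lebesgue_null d (fun x => a x = 0) -> lebesgue_null d (fun x => F x = 0).
Proof. intros Hd Hi Hg Ha HF H0.
  apply (null_cunion d (fun n => match n with O => (fun x => a x = 0) | S n' => (fun x => F x = 0 /\ / INR (S n') <= Rabs (a x)) end)).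
  - intros [|n]; auto. set (q := / INR (S n)). assert (Hq: 0 < q) by (apply Rinv_0_lt_compat, lt_0_INR; lia).
    apply lipgraph with i; auto. intros N HN.
    destruct (Hg N ltac:(lra)) as [Kg [Bg [HKg Hg']]]. destruct (Ha N ltac:(lra)) as [Ka [Ba [HKa Ha']]].
    exists ((Rabs Bg * Ka + Rabs Ba * Kg) / (q * q)). split.
    { apply Rmult_le_pos. pose proof (Rabs_pos Bg); pose proof (Rabs_pos Ba). nra. left; apply Rinv_0_lt_compat; nra. }
    intros x x' s [Fx Ax] [Fx' Ax'] Hs Hk.
    destruct (Hg' x x' s Hs Hk) as [Bgx Dg]. destruct (Ha' x x' s Hs Hk) as [Bax Da].
    destruct (Ha' x' x' 0 ltac:(lra)) as [Bax' _]. { intros k Hk1 Hk2. destruct (Hk k Hk1 Hk2) as [_ [H2 _]]. repeat split; auto. replace (x' k - x' k) with 0 by ring; rewrite Rabs_R0; lra. }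
    destruct (Hg' x' x' 0 ltac:(lra)) as [Bgx' _]. { intros k Hk1 Hk2. destruct (Hk k Hk1 Hk2) as [_ [H2 _]]. repeat split; auto. replace (x' k - x' k) with 0 by ring; rewrite Rabs_R0; lra. }
    rewrite HF in Fx, Fx'.
    assert (E: (x i - x' i) * (a x * a x') = g x' * (a x - a x') + a x' * (g x' - g x)).
    { replace (g x) with (- (x i * a x)) by lra. replace (g x') with (- (x' i * a x')) by lra. ring. }
    assert (E2: Rabs (x i - x' i) * (Rabs (a x) * Rabs (a x')) <= (Rabs Bg * Ka + Rabs Ba * Kg) * s).
    { rewrite <- Rabs_mult, <- Rabs_mult, E. eapply Rle_trans. apply Rabs_triang. rewrite !Rabs_mult.
      pose proof (Rabs_pos (g x')). pose proof (Rabs_pos (a x')). pose proof (Rabs_pos (a x - a x')). pose proof (Rabs_pos (g x' - g x)).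
      rewrite <- (Rabs_Ropp (g x' - g x)) in *. replace (- (g x' - g x)) with (g x - g x') in * by ring.
      assert (Rabs (g x') <= Rabs Bg) by (eapply Rle_trans; [apply Bgx'| apply Rle_abs]).
      assert (Rabs (a x') <= Rabs Ba) by (eapply Rle_trans; [apply Bax'| apply Rle_abs]).
      apply Rle_trans with (Rabs Bg * (Ka * s) + Rabs Ba * (Kg * s)); [|right; ring].
      apply Rplus_le_compat; apply Rmult_le_compat; auto; apply Rabs_pos. }
    assert (E3: q * q <= Rabs (a x) * Rabs (a x')) by (apply Rmult_le_compat; lra).
    pose proof (Rabs_pos (x i - x' i)).
    apply Rmult_le_reg_r with (q * q). nra.
    apply Rle_trans with (Rabs (x i - x' i) * (Rabs (a x) * Rabs (a x'))). apply Rmult_le_compat_l; auto.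
    eapply Rle_trans. apply E2. right. field. lra.
  - intros x Fx. destruct (Req_dec (a x) 0). exists O; auto.
    destruct (INR_unbounded (/ Rabs (a x))) as [n Hn]. exists (S n). split; auto.
    assert (0 < Rabs (a x)) by (apply Rabs_pos_lt; auto).
    rewrite <- (Rinv_inv (Rabs (a x))). apply Rinv_le_contravar. apply Rinv_0_lt_compat; auto. rewrite S_INR. lra.
Qed.

Lemma lin_null d i F g w : (1 <= d)%nat -> (i < d)%nat -> PolyI d i g -> w <> 0 ->
  (forall x, F x = g x + x i * w) -> lebesgue_null d (fun x => F x = 0).
Proof. intros Hd Hi Hg Hw HF. apply (aff_null d i F g (fun _ => w)); auto. apply polyI_const.
  apply null_empty; auto. Qed.

Lemma quad_null d i F g : (1 <= d)%nat -> (i < d)%nat -> PolyI d i g ->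
  (forall x, F x = g x + x i * x i) -> lebesgue_null d (fun x => F x = 0).
Proof. intros Hd Hi Hg HF.
  assert (Z: lebesgue_null d (fun x => x i = 0)).
  { apply lipgraph with i; auto. intros N HN. exists 0. split; [lra|]. intros x x' s H1 H2 _ _. rewrite H1, H2. replace (0-0) with 0 by ring. rewrite Rabs_R0. lra. }
  assert (P: forall sg : R, sg * sg = 1 -> lebesgue_null d (fun x => exists n, F x = 0 /\ / INR (S n) <= sg * x i)).
  { intros sg Hsg. apply (null_cunion d (fun n x => F x = 0 /\ / INR (S n) <= sg * x i)).
    2:{ intros x [n Hx]; exists n; auto. }
    intros n. set (q := / INR (S n)). assert (Hq: 0 < q) by (apply Rinv_0_lt_compat, lt_0_INR; lia).
    apply lipgraph with i; auto. intros N HN. destruct (Hg N ltac:(lra)) as [K [B [HK Hg']]].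
    exists (K / (2 * q)). split. apply Rmult_le_pos; auto. left; apply Rinv_0_lt_compat; lra.
    intros x x' s [Fx Ax] [Fx' Ax'] Hs Hk. destruct (Hg' x x' s Hs Hk) as [_ Dg].
    rewrite HF in Fx, Fx'.
    assert (E: (x i - x' i) * (sg * x i + sg * x' i) = sg * (g x' - g x)).
    { replace (g x) with (- (x i * x i)) by lra. replace (g x') with (- (x' i * x' i)) by lra. ring. }
    assert (E2: Rabs (x i - x' i) * (sg * x i + sg * x' i) <= K * s).
    { replace (sg * x i + sg * x' i) with (Rabs (sg * x i + sg * x' i)) by (apply Rabs_pos_eq; lra).
      rewrite <- Rabs_mult, E, Rabs_mult. replace (Rabs sg) with 1.
      rewrite <- Rabs_Ropp. replace (- (g x' - g x)) with (g x - g x') by ring. lra.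
      destruct (Rcase_abs sg); [rewrite Rabs_left | rewrite Rabs_pos_eq]; nra. }
    pose proof (Rabs_pos (x i - x' i)).
    apply Rmult_le_reg_r with (2 * q). lra.
    apply Rle_trans with (Rabs (x i - x' i) * (sg * x i + sg * x' i)). apply Rmult_le_compat_l; auto. lra.
    eapply Rle_trans. apply E2. right. field. lra. }
  apply null_subset with (fun x => x i = 0 \/ ((exists n, F x = 0 /\ / INR (S n) <= 1 * x i) \/ (exists n, F x = 0 /\ / INR (S n) <= -1 * x i))).
  apply null_union2; auto. apply null_union2; apply P; ring.
  intros x Fx. destruct (Req_dec (x i) 0); auto. right.
  destruct (INR_unbounded (/ Rabs (x i))) as [n Hn].
  assert (0 < Rabs (x i)) by (apply Rabs_pos_lt; auto).
  assert (/ INR (S n) <= Rabs (x i)).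
  { rewrite <- (Rinv_inv (Rabs (x i))). apply Rinv_le_contravar. apply Rinv_0_lt_compat; auto. rewrite S_INR. lra. }
  destruct (Rcase_abs (x i)).
  - right. exists n. split; auto. rewrite Rabs_left in H1; lra.
  - left. exists n. split; auto. rewrite Rabs_pos_eq in H1; lra.
Qed.

Lemma Rabs_bound_nonneg x B : Rabs x <= B -> 0 <= B.
Proof. intros; pose proof (Rabs_pos x); lra. Qed.

Lemma poly_const d w : PolyAll d (fun _ => w).
Proof. intros N HN. exists 0, (Rabs w). split; [lra|]. intros. split; [lra|]. replace (w - w) with 0 by ring. rewrite Rabs_R0. lra. Qed.

Lemma poly_coord d k : (k < d)%nat -> PolyAll d (fun x => x k).
Proof. intros Hk N HN. exists 1, N. split; [lra|]. intros x x' s Hs H. destruct (H k Hk) as [H1 [H2 H3]]. split; auto. lra. Qed.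

Lemma poly_add d F G : PolyAll d F -> PolyAll d G -> PolyAll d (fun x => F x + G x).
Proof. intros HF HG N HN. destruct (HF N HN) as [K1 [B1 [HK1 H1]]]. destruct (HG N HN) as [K2 [B2 [HK2 H2]]].
  exists (K1 + K2), (B1 + B2). split; [lra|]. intros x x' s Hs H.
  destruct (H1 x x' s Hs H) as [A1 D1]. destruct (H2 x x' s Hs H) as [A2 D2]. split.
  eapply Rle_trans. apply Rabs_triang. lra.
  replace (F x + G x - (F x' + G x')) with ((F x - F x') + (G x - G x')) by ring.
  eapply Rle_trans. apply Rabs_triang. lra. Qed.

Lemma poly_opp d F : PolyAll d F -> PolyAll d (fun x => - F x).
Proof. intros HF N HN. destruct (HF N HN) as [K1 [B1 [HK1 H1]]]. exists K1, B1. split; auto. intros x x' s Hs H.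
  destruct (H1 x x' s Hs H) as [A1 D1]. rewrite Rabs_Ropp. split; auto.
  replace (- F x - - F x') with (- (F x - F x')) by ring. rewrite Rabs_Ropp. auto. Qed.

Lemma poly_mul d F G : PolyAll d F -> PolyAll d G -> PolyAll d (fun x => F x * G x).
Proof. intros HF HG N HN. destruct (HF N HN) as [K1 [B1 [HK1 H1]]]. destruct (HG N HN) as [K2 [B2 [HK2 H2]]].
  exists (Rabs B1 * K2 + Rabs B2 * K1), (B1 * B2). split.
  { pose proof (Rabs_pos B1); pose proof (Rabs_pos B2). nra. }
  intros x x' s Hs H.
  assert (H': forall k, (k < d)%nat -> Rabs (x' k) <= N /\ Rabs (x' k) <= N /\ Rabs (x' k - x' k) <= 0).
  { intros k Hk. destruct (H k Hk) as [_ [Hb _]]. replace (x' k - x' k) with 0 by ring. rewrite Rabs_R0. repeat split; auto; lra. }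
  destruct (H1 x x' s Hs H) as [A1 D1]. destruct (H2 x x' s Hs H) as [A2 D2].
  destruct (H2 x' x' 0 (Rle_refl 0) H') as [A2' _].
  pose proof (Rabs_pos (F x)). pose proof (Rabs_pos (G x)). pose proof (Rabs_pos (G x')).
  pose proof (Rabs_pos (F x - F x')). pose proof (Rabs_pos (G x - G x')).
  split. rewrite Rabs_mult. apply Rmult_le_compat; auto.
  replace (F x * G x - F x' * G x') with (F x * (G x - G x') + G x' * (F x - F x')) by ring.
  eapply Rle_trans. apply Rabs_triang. rewrite !Rabs_mult.
  assert (Rabs (F x) <= Rabs B1) by (eapply Rle_trans; [apply A1|apply Rle_abs]).
  assert (Rabs (G x') <= Rabs B2) by (eapply Rle_trans; [apply A2'|apply Rle_abs]).
  apply Rle_trans with (Rabs B1 * (K2 * s) + Rabs B2 * (K1 * s)); [|right; ring].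
  apply Rplus_le_compat; apply Rmult_le_compat; auto.
Qed.

Lemma polyAll_upd d i t F : PolyAll d F -> PolyAll d (fun x => F (upd x i t)).
Proof. intros HF N HN. destruct (HF (Rmax N (Rabs t))) as [K [B [HK H]]]. apply Rle_trans with N; auto. apply Rmax_l.
  exists K, B. split; auto. intros x x' s Hs Hx. apply H; auto. intros k Hk. unfold upd. destruct (Nat.eqb_spec k i).
  - repeat split; try apply Rmax_r. replace (t - t) with 0 by ring. rewrite Rabs_R0; auto.
  - destruct (Hx k Hk) as [H1 [H2 H3]]. pose proof (Rmax_l N (Rabs t)). repeat split; auto; lra.
Qed.

Definition CPoly d (F : (nat -> R) -> Defs.C) := PolyAll d (fun x => fst (F x)) /\ PolyAll d (fun x => snd (F x)).

Lemma cpoly_const d z : CPoly d (fun _ => z).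
Proof. split; apply poly_const. Qed.

Lemma cpoly_add d F G : CPoly d F -> CPoly d G -> CPoly d (fun x => Cadd (F x) (G x)).
Proof. intros [F1 F2] [G1 G2]. split; simpl; apply poly_add; auto. Qed.

Lemma cpoly_mul d F G : CPoly d F -> CPoly d G -> CPoly d (fun x => Cmul (F x) (G x)).
Proof. intros [F1 F2] [G1 G2]. unfold Cmul. split; simpl.
  apply (poly_add d (fun x => fst (F x) * fst (G x)) (fun x => - (snd (F x) * snd (G x)))); [apply poly_mul; auto | apply poly_opp, poly_mul; auto].
  apply poly_add; apply poly_mul; auto. Qed.

Lemma cpoly_conj d F : CPoly d F -> CPoly d (fun x => Cconj (F x)).
Proof. intros [F1 F2]. split; simpl; auto. apply poly_opp; auto. Qed.

Lemma cpoly_sum d n (F : nat -> (nat -> R) -> Defs.C) : (forall j, (j < n)%nat -> CPoly d (F j)) -> CPoly d (fun x => Csum n (fun j => F j x)).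
Proof. induction n; intros H; simpl. apply cpoly_const. apply cpoly_add. apply IHn; intros; apply H; lia. apply H; lia. Qed.

Lemma cpoly_vec L p : (p < L)%nat -> CPoly (2 * L) (fun x => vec_of_real x p).
Proof. intros Hp. split; simpl; apply poly_coord; lia. Qed.

Lemma cpoly_Gf L m xi (c c' : (nat -> R) -> cvec) : (1 <= L)%nat ->
  (forall p, (p < L)%nat -> CPoly (2 * L) (fun x => c x p)) -> (forall p, (p < L)%nat -> CPoly (2 * L) (fun x => c' x p)) ->
  CPoly (2 * L) (fun x => Gf L m xi (c x) (c' x)).
Proof. intros HL Hc Hc'. unfold Gf. apply cpoly_sum. intros j Hj. apply cpoly_mul. apply cpoly_mul.
  apply Hc. apply Nat.mod_upper_bound; lia. apply cpoly_conj, Hc'; auto. apply cpoly_const. Qed.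

Definition Cscale (t : R) (z : Defs.C) : Defs.C := (t * fst z, t * snd z).
Definition vadd (c : cvec) (t : R) (e : cvec) : cvec := fun p => Cadd (c p) (Cscale t (e p)).
Definition delta (p0 : nat) (z : Defs.C) : cvec := fun p => if Nat.eqb p p0 then z else C0.

Lemma Csum_cscale t n F : Cscale t (Csum n F) = Csum n (fun j => Cscale t (F j)).
Proof. induction n; simpl. unfold Cscale, C0; simpl; f_equal; ring. rewrite <- IHn. generalize (Csum n F) (F n). intros. Csolve; unfold Cscale; simpl; f_equal; ring. Qed.

Lemma Gf_addl L m xi c t e c' : Gf L m xi (vadd c t e) c' = Cadd (Gf L m xi c c') (Cscale t (Gf L m xi e c')).
Proof. unfold Gf. rewrite Csum_cscale, <- Csum_add. apply Csum_ext. intros j _. unfold vadd.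
  generalize (c ((j + m) mod L)%nat) (e ((j + m) mod L)%nat) (c' j) (W L (- (INR xi * INR j))). intros. Csolve; unfold Cscale; simpl; f_equal; ring. Qed.

Lemma Gf_addr L m xi c t e c' : Gf L m xi c (vadd c' t e) = Cadd (Gf L m xi c c') (Cscale t (Gf L m xi c e)).
Proof. unfold Gf. rewrite Csum_cscale, <- Csum_add. apply Csum_ext. intros j _. unfold vadd.
  generalize (c ((j + m) mod L)%nat) (e j) (c' j) (W L (- (INR xi * INR j))). intros. Csolve; unfold Cscale; simpl; f_equal; ring. Qed.

Lemma upd_same x i : upd x i (x i) = x.
Proof. apply functional_extensionality. intros k. unfold upd. destruct (Nat.eqb_spec k i); subst; auto. Qed.

Lemma upd_upd_comm x i j s t : i <> j -> upd (upd x i s) j t = upd (upd x j t) i s.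
Proof. intros H. apply functional_extensionality. intros k. unfold upd. destruct (Nat.eqb_spec k j), (Nat.eqb_spec k i); subst; auto; lia. Qed.

Lemma vec_upd_re x p t : vec_of_real (upd x (2 * p) t) = vadd (vec_of_real (upd x (2 * p) 0)) t (delta p (1, 0)).
Proof. apply functional_extensionality. intros q. unfold vec_of_real, vadd, delta, upd, Cadd, Cscale, C0. cbn [fst snd].
  destruct (Nat.eqb_spec q p).
  - subst. rewrite !Nat.eqb_refl. destruct (Nat.eqb_spec (2 * p + 1) (2 * p)); [lia|]. cbn [fst snd]; f_equal; ring.
  - destruct (Nat.eqb_spec (2 * q) (2 * p)); [lia|]. destruct (Nat.eqb_spec (2 * q + 1) (2 * p)); [lia|]. cbn [fst snd]; f_equal; ring.
Qed.

Lemma vec_upd_im x p t : vec_of_real (upd x (2 * p + 1) t) = vadd (vec_of_real (upd x (2 * p + 1) 0)) t (delta p (0, 1)).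
Proof. apply functional_extensionality. intros q. unfold vec_of_real, vadd, delta, upd, Cadd, Cscale, C0. cbn [fst snd].
  destruct (Nat.eqb_spec q p).
  - subst. rewrite !Nat.eqb_refl. destruct (Nat.eqb_spec (2 * p) (2 * p + 1)); [lia|]. cbn [fst snd]; f_equal; ring.
  - destruct (Nat.eqb_spec (2 * q) (2 * p + 1)); [lia|]. destruct (Nat.eqb_spec (2 * q + 1) (2 * p + 1)); [lia|]. cbn [fst snd]; f_equal; ring.
Qed.

Definition e0 : cvec := delta 0 (1, 0).

Lemma W_zero_idx L xi : W L (- (INR xi * INR 0)) = (1, 0).
Proof. change (INR 0) with 0. rewrite Rmult_0_r, Ropp_0. apply W_0. Qed.

Lemma Cconj_C0 : Cconj C0 = C0. Proof. unfold Cconj, C0; simpl; f_equal; ring. Qed.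

Lemma modsum_ne0 L j m : (j < L)%nat -> (0 < m < L)%nat -> j <> (L - m)%nat -> ((j + m) mod L <> 0)%nat.
Proof. intros Hj Hm Hne. destruct (Nat.lt_ge_cases (j + m) L).
  rewrite Nat.mod_small by auto. lia.
  replace (j + m)%nat with ((j + m - L) + 1 * L)%nat by lia. rewrite Nat.Div0.mod_add. rewrite Nat.mod_small by lia. lia. Qed.

Lemma E1 L m xi e' : (1 <= L)%nat -> (m < L)%nat -> Gf L m xi e' e0 = e' m.
Proof. intros HL Hm. unfold Gf. rewrite (Csum_single L _ 0).
  - rewrite W_zero_idx. simpl (0 + m)%nat. rewrite Nat.mod_small by auto. unfold e0, delta. simpl. generalize (e' m). intros. Csolve.
  - intros j Hj Hne. unfold e0, delta. destruct (Nat.eqb_spec j 0); [lia|]. rewrite Cconj_C0, Cmul_0_r. apply Cmul_0_l.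
  - lia. Qed.

Lemma E2 L m xi e' : (0 < m < L)%nat -> Gf L m xi e0 e' = Cmul (Cconj (e' (L - m)%nat)) (W L (- (INR xi * INR (L - m)))).
Proof. intros Hm. unfold Gf. rewrite (Csum_single L _ (L - m)).
  - replace ((L - m + m) mod L)%nat with 0%nat. unfold e0, delta. simpl. generalize (Cconj (e' (L - m)%nat)) (W L (- (INR xi * INR (L - m)))). intros. Csolve.
    replace (L - m + m)%nat with L by lia. symmetry. apply Nat.Div0.mod_same.
  - intros j Hj Hne. unfold e0, delta. destruct (Nat.eqb_spec ((j + m) mod L) 0). exfalso; apply (modsum_ne0 L j m); auto.
    rewrite !Cmul_0_l. auto.
  - lia. Qed.

Lemma E3 L m xi : (0 < m < L)%nat -> Gf L m xi e0 e0 = C0.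
Proof. intros Hm. rewrite E2 by auto. unfold e0, delta. destruct (Nat.eqb_spec (L - m) 0); [lia|]. rewrite Cconj_C0. apply Cmul_0_l. Qed.

Lemma E4 L xi c : (1 <= L)%nat -> Gf L 0 xi e0 c = Cconj (c 0%nat).
Proof. intros HL. unfold Gf. rewrite (Csum_single L _ 0).
  - rewrite W_zero_idx. simpl (0 + 0)%nat. rewrite Nat.Div0.mod_0_l. unfold e0, delta. simpl. generalize (Cconj (c 0%nat)). intros. Csolve.
  - intros j Hj Hne. unfold e0, delta. replace ((j + 0) mod L)%nat with j by (rewrite Nat.add_0_r, Nat.mod_small; auto).
    destruct (Nat.eqb_spec j 0); [lia|]. rewrite !Cmul_0_l. auto.
  - lia. Qed.

Lemma G_expand L m xi c0 t e : Gf L m xi (vadd c0 t e) (vadd c0 t e) =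
  Cadd (Gf L m xi c0 c0) (Cscale t (Cadd (Cadd (Gf L m xi c0 e) (Gf L m xi e c0)) (Cscale t (Gf L m xi e e)))).
Proof. rewrite Gf_addl, !Gf_addr. generalize (Gf L m xi c0 c0) (Gf L m xi c0 e) (Gf L m xi e c0) (Gf L m xi e e).
  intros. Csolve; unfold Cscale; simpl; f_equal; ring. Qed.

Definition ell L m xi (c : cvec) := Cadd (Gf L m xi c e0) (Gf L m xi e0 c).

Lemma ell_lin L m xi c s e : ell L m xi (vadd c s e) = Cadd (ell L m xi c) (Cscale s (ell L m xi e)).
Proof. unfold ell. rewrite Gf_addl, Gf_addr. generalize (Gf L m xi c e0) (Gf L m xi e e0) (Gf L m xi e0 c) (Gf L m xi e0 e).
  intros. Csolve; unfold Cscale; simpl; f_equal; ring. Qed.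

Lemma vec_upd0 x t : vec_of_real (upd x 0 t) = vadd (vec_of_real (upd x 0 0)) t e0.
Proof. exact (vec_upd_re x 0 t). Qed.

Lemma cpoly_e0 L : forall p, (p < L)%nat -> CPoly (2 * L) (fun _ : nat -> R => e0 p).
Proof. intros; apply cpoly_const. Qed.

Lemma cpoly_vecs L : forall p, (p < L)%nat -> CPoly (2 * L) (fun x => vec_of_real x p).
Proof. intros; apply cpoly_vec; auto. Qed.

Lemma cpoly_G L m xi : (1 <= L)%nat -> CPoly (2 * L) (fun x => Gf L m xi (vec_of_real x) (vec_of_real x)).
Proof. intros HL. apply cpoly_Gf; auto; apply cpoly_vecs. Qed.

Lemma cpoly_ell L m xi : (1 <= L)%nat -> CPoly (2 * L) (fun x => ell L m xi (vec_of_real x)).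
Proof. intros HL. unfold ell. apply cpoly_add; apply cpoly_Gf; auto; try apply cpoly_vecs; apply cpoly_e0. Qed.

Lemma null_m0 L xi : (1 <= L)%nat -> lebesgue_null (2 * L) (fun x => fst (Gf L 0 xi (vec_of_real x) (vec_of_real x)) = 0).
Proof. intros HL.
  apply (quad_null (2 * L) 0 _ (fun x => fst (Gf L 0 xi (vec_of_real (upd x 0 0)) (vec_of_real (upd x 0 0))))); try lia.
  - apply (polyI_upd (2 * L) 0 0 (fun x => fst (Gf L 0 xi (vec_of_real x) (vec_of_real x)))). apply cpoly_G; auto.
  - intros x. pattern x at 1 2. rewrite <- (upd_same x 0). rewrite vec_upd0.
    rewrite G_expand. rewrite E1, E4 by lia. rewrite E4 by lia.
    set (GG := Gf L 0 xi (vec_of_real (upd x 0 0)) (vec_of_real (upd x 0 0))).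
    unfold e0, delta, vec_of_real, upd, Cadd, Cscale, Cconj. simpl. ring.
Qed.

Lemma null_gen L m xi (pi : Defs.C -> R) k e' :
  (forall z w, pi (Cadd z w) = pi z + pi w) -> (forall t z, pi (Cscale t z) = t * pi z) ->
  (forall F, CPoly (2 * L) F -> PolyAll (2 * L) (fun x => pi (F x))) ->
  (1 <= L)%nat -> (0 < m < L)%nat -> (k < 2 * L)%nat -> k <> 0%nat ->
  (forall x t, vec_of_real (upd x k t) = vadd (vec_of_real (upd x k 0)) t e') ->
  pi (ell L m xi e') <> 0 ->
  lebesgue_null (2 * L) (fun x => pi (Gf L m xi (vec_of_real x) (vec_of_real x)) = 0).
Proof. intros Hadd Hsc Hp HL Hm Hk Hk0 Hv Hw.
  assert (H0: pi C0 = 0). { replace C0 with (Cscale 0 C0) by (unfold Cscale, C0; simpl; f_equal; ring). rewrite Hsc. ring. }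
  apply (aff_null (2 * L) 0 _ (fun x => pi (Gf L m xi (vec_of_real (upd x 0 0)) (vec_of_real (upd x 0 0))))
           (fun x => pi (ell L m xi (vec_of_real (upd x 0 0))))); try lia.
  - apply (polyI_upd (2 * L) 0 0 (fun x => pi (Gf L m xi (vec_of_real x) (vec_of_real x)))). apply Hp, cpoly_G; auto.
  - apply (polyI_upd (2 * L) 0 0 (fun x => pi (ell L m xi (vec_of_real x)))). apply Hp, cpoly_ell; auto.
  - intros x. pattern x at 1 2. rewrite <- (upd_same x 0). rewrite vec_upd0, G_expand, E3 by lia.
    rewrite Hadd, Hsc, Hadd, Hsc. fold (ell L m xi (vec_of_real (upd x 0 0))). rewrite H0. ring.
  - apply (lin_null (2 * L) k _ (fun x => pi (ell L m xi (vec_of_real (upd (upd x k 0) 0 0)))) (pi (ell L m xi e'))); auto; try lia.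
    + apply (polyI_upd (2 * L) k 0 (fun x => pi (ell L m xi (vec_of_real (upd x 0 0))))).
      apply (polyAll_upd (2 * L) 0 0 (fun x => pi (ell L m xi (vec_of_real x)))). apply Hp, cpoly_ell; auto.
    + intros x. rewrite <- (upd_same (upd x 0 0) k). rewrite Hv. rewrite ell_lin, Hadd, Hsc.
      rewrite upd_upd_comm by auto. unfold upd at 3. destruct (Nat.eqb_spec k 0); [lia|]. ring.
Qed.

Lemma Znull L m xi : (1 <= L)%nat -> (m < L)%nat ->
  lebesgue_null (2 * L) (fun x => Gf L m xi (vec_of_real x) (vec_of_real x) = C0).
Proof. intros HL Hm. destruct (Nat.eq_dec m 0).
  - subst. apply null_subset with (fun x => fst (Gf L 0 xi (vec_of_real x) (vec_of_real x)) = 0). apply null_m0; auto.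
    intros x H. rewrite H. auto.
  - assert (Hsum: fst (ell L m xi (delta m (1, 0))) + snd (ell L m xi (delta m (0, 1))) = 2).
    { unfold ell. rewrite !E1, !E2 by lia. unfold delta. rewrite !Nat.eqb_refl.
      destruct (Nat.eqb (L - m) m); generalize (W L (- (INR xi * INR (L - m)))); intros; Csolve; lra. }
    destruct (Req_dec (fst (ell L m xi (delta m (1, 0)))) 0) as [H1|H1].
    + apply null_subset with (fun x => snd (Gf L m xi (vec_of_real x) (vec_of_real x)) = 0).
      2:{ intros x H. rewrite H. auto. }
      apply (null_gen L m xi snd (2 * m + 1)%nat (delta m (0, 1))).
      * intros; reflexivity.
      * intros; reflexivity.
      * intros F [_ HF]; auto.
      * auto.
      * lia.
      * lia.
      * lia.
      * intros; apply vec_upd_im.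
      * lra.
    + apply null_subset with (fun x => fst (Gf L m xi (vec_of_real x) (vec_of_real x)) = 0).
      2:{ intros x H. rewrite H. auto. }
      apply (null_gen L m xi fst (2 * m)%nat (delta m (1, 0))).
      * intros; reflexivity.
      * intros; reflexivity.
      * intros F [HF _]; auto.
      * auto.
      * lia.
      * lia.
      * lia.
      * intros; apply vec_upd_re.
      * auto.
Qed.

Theorem mainTheorem8 (L : nat) (hL : (1 <= L)%nat) :
  lebesgue_null (2 * L) (fun x => ~ diag_permissible L (vec_of_real x)).
Proof.
  apply null_subset with (fun x => exists m xi, (m < L)%nat /\ (xi < L)%nat /\ Gf L m xi (vec_of_real x) (vec_of_real x) = C0).
  2:{ intros x H. apply partA; auto. }
  apply (null_cunion (2 * L) (fun m x => exists xi, (m < L)%nat /\ (xi < L)%nat /\ Gf L m xi (vec_of_real x) (vec_of_real x) = C0)).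
  2:{ intros x [m [xi H]]. exists m, xi. auto. }
  intros m. apply (null_cunion (2 * L) (fun xi x => (m < L)%nat /\ (xi < L)%nat /\ Gf L m xi (vec_of_real x) (vec_of_real x) = C0)).
  2:{ intros x [xi H]. exists xi. auto. }
  intros xi. destruct (lt_dec m L).
  - apply null_subset with (fun x => Gf L m xi (vec_of_real x) (vec_of_real x) = C0). apply Znull; auto. intros x [_ [_ H]]; auto.
  - apply null_empty. lia. intros x [H _]. lia.
Qed.
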